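(* Let $f:X\to X$ be a piecewise contracting map on a compact, locally connected metric space $(X,d)$, and let $L$, $\Omega$ and $\Lambda$ denote its limit set, non-wandering set and attractor. Then (i) $L\subset\Omega\subset\Lambda$; (ii) every non-wandering point lying in the interior (in $X$) of $\tilde X$ is recurrent, i.e. if $x\in\operatorname{int}(\tilde X)\cap\Omega$ then $x\in\omega(x)$.
   Context: A map $f:X\to X$ on a compact, locally connected metric space $(X,d)$ is piecewise contracting if there are $N\ge2$ non-empty, pairwise disjoint open sets $X_1,\dots,X_N$ with $X=\bigcup_i\overline{X_i}$, a constant $\lambda\in(0,1)$ with $d(f(x),f(y))\le\lambda d(x,y)$ for all $x,y$ in the same $X_i$, and such that $\tilde X:=\bigcap_{n\ge0}f^{-n}(X\setminus\Delta)\neq\emptyset$, where $\Delta:=X\setminus\bigcup_iX_i$ ($f$ is arbitrary on $\Delta$). For $x\in\tilde X$, $\omega(x)$ is the set of $y\in X$ such that $f^{n_k}(x)\to y$ for some divergent sequence $(n_k)$; the limit set is $L:=\overline{\bigcup_{x\in\tilde X}\omega(x)}$. A point $x\in\tilde X$ is recurrent if $x\in\omega(x)$. A point $x\in X$ is non-wandering if for every $\epsilon>0$ there is a divergent sequence $(n_k)$ with $f^{n_k}(B(x,\epsilon)\cap\tilde X)\cap B(x,\epsilon)\neq\emptyset$ for all $k$; $\Omega$ is the set of non-wandering points. For $A\subset X$ let $F_i(A):=\overline{f(A\cap X_i)}$; an atom of generation $n\ge1$ is a set of the form $F_{i_n}\circ\cdots\circ F_{i_1}(X)$ with $i_1,\dots,i_n\in\{1,\dots,N\}$;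 $\mathcal A_n$ is the set of atoms of generation $n$, $\Lambda_n:=\bigcup_{A\in\mathcal A_n}A$, and the attractor is $\Lambda:=\bigcap_{n\ge1}\Lambda_n$. *)

(* Defs.v *)
From HB Require Import structures.
From mathcomp Require Import all_boot all_order all_algebra.
From mathcomp Require Import all_classical all_reals all_analysis.
Set Implicit Arguments. Unset Strict Implicit. Unset Printing Implicit Defensive.
Import Order.TTheory GRing.Theory Num.Theory.
Local Open Scope classical_set_scope.
Local Open Scope ring_scope.

Section PC.
Context {R : realType} {X : metricType R}.

Definition locally_connected_space : Prop :=
  forall (x : X) (U : set X), nbhs x U ->
    exists V : set X, [/\ open V, V x, connected V & V `<=` U].

Definition divergent (n : nat -> nat) : Prop :=
  forall M : nat, exists K : nat, forall k, (K <= k)%N -> (M <= n k)%N.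

Variables (f : X -> X) (N : nat) (Xi : 'I_N -> set X).

Definition Delta : set X := ~` (\bigcup_(i in setT) Xi i).

(* tilde X = bigcap_{n>=0} f^{-n}(X \ Delta) *)
Definition tildeX : set X := [set x | forall n : nat, ~ Delta (iter n f x)].

Definition piecewise_contracting (lam : R) : Prop :=
  [/\ (2 <= N)%N,
      (forall i, Xi i !=set0),
      (forall i, open (Xi i)),
      (forall i j, i != j -> Xi i `&` Xi j = set0)
    & [/\ setT = \bigcup_(i in setT) closure (Xi i),
      0 < lam < 1,
      (forall i (x y : X), Xi i x -> Xi i y ->
          mdist (f x) (f y) <= lam * mdist x y)
    & tildeX !=set0]].

Definition omega (x : X) : set X :=
  [set y | exists n : nat -> nat, divergent n /\
     (fun k => iter (n k) f x) @ \oo --> y].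

Definition limit_set : set X :=
  closure (\bigcup_(x in tildeX) omega x).

Definition recurrent (x : X) : Prop := tildeX x /\ omega x x.

Definition nonwandering : set X :=
  [set x | forall eps : R, 0 < eps ->
     exists n : nat -> nat, divergent n /\
       forall k, (iter (n k) f @` (ball x eps `&` tildeX)) `&` ball x eps !=set0].

Definition Fi (i : 'I_N) (A : set X) : set X := closure (f @` (A `&` Xi i)).

(* the atom F_{i_n} o ... o F_{i_1}(X) for s = [:: i_1; ...; i_n] *)
Definition atom (s : seq 'I_N) : set X := foldl (fun A i => Fi i A) setT s.

Definition Lambda_n (n : nat) : set X :=
  \bigcup_(s in [set s : seq 'I_N | size s = n]) atom s.

Definition attractor : set X := \bigcap_(n in [set n : nat | (1 <= n)%N]) Lambda_n n.

End PC.

(* Main.v *)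
Require Import Defs.
From HB Require Import structures.
From mathcomp Require Import all_boot all_order all_algebra.
From mathcomp Require Import all_classical all_reals all_analysis.
From mathcomp Require Import zify.
Import Order.TTheory GRing.Theory Num.Theory.
Local Open Scope classical_set_scope.
Local Open Scope ring_scope.

Section Helpers.
Context {R : realType} {X : metricType R} (f : X -> X) (N : nat)
  (Xi : 'I_N -> set X).

Lemma tildeX_iter x m : tildeX f Xi x -> tildeX f Xi (iter m f x).
Proof. by move=> hx n; rewrite -iterD; exact: hx. Qed.

Lemma notDelta_in y : ~ Delta Xi y -> exists i, Xi i y.
Proof.
move=> hy; have [//|h] := pselect (exists i, Xi i y).
by exfalso; apply: hy => -[i _ Hi]; apply: h; exists i.
Qed.

Lemma omega_sub_nw x y : tildeX f Xi x -> omega f x y -> nonwandering f Xi y.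
Proof.
move=> hx [n [dn cv]] eps eps0.
have [K0 _ HK0] := cvg_ball cv eps0.
have [K1 HK1] := dn (n K0).
set m := n K0.
pose K := maxn K0 K1.
exists (fun k => (n (k + K) - m)%N); split.
  move=> M; have [K2 HK2] := dn (M + m)%N; exists K2 => k hk.
  have := HK2 (k + K)%N ltac:(lia); lia.
move=> k; have hm : (m <= n (k + K))%N by apply: HK1; lia.
exists (iter (n (k + K)) f x); split.
  exists (iter m f x); first split.
  - by apply: HK0; rewrite /=.
  - exact: tildeX_iter.
  - by rewrite -iterD subnK.
by apply: HK0 => /=; lia.
Qed.

Lemma nw_closed : closed (nonwandering f Xi).
Proof.
move=> y cy eps eps0.
have e20 : 0 < eps / 2 by rewrite divr_gt0.
have [x [Hx bx]] := cy _ (nbhsx_ballx y (eps / 2) e20).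
have [n [dn Hn]] := Hx _ e20.
exists n; split => // k.
have [w [[z [bz tz] <-] bw]] := Hn k.
exists (iter (n k) f z); split.
  exists z; split => //.
  rewrite (splitr eps); apply: (ball_triangle _ bz).
  exact: bx.
rewrite (splitr eps); apply: (ball_triangle _ bw).
exact: bx.
Qed.

Lemma iter_atom n z : tildeX f Xi z ->
  exists s : seq 'I_N, size s = n /\ atom f Xi s (iter n f z).
Proof.
move=> tz; elim: n => [|n [s [hs hA]]]; first by exists [::].
have [i hi] := notDelta_in _ (tz n).
exists (rcons s i); split; first by rewrite size_rcons hs.
rewrite /atom foldl_rcons -/(atom f Xi s) /Fi.
apply: subset_closure; exists (iter n f z) => //.
Qed.

Lemma finite_size n : finite_set [set s : seq 'I_N | size s = n].
Proof.
have -> : [set s : seq 'I_N | size s = n] = (@tval n 'I_N) @` setT.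
  apply/seteqP; split => s /=.
    move=> hs; have hs' : size s == n by apply/eqP.
    by exists (Tuple hs').
  by move=> [t _ <-]; exact: size_tuple.
exact/finite_image/finite_finset.
Qed.

Lemma Lambda_closed n : (1 <= n)%N -> closed (Lambda_n f Xi n).
Proof.
move=> n1; apply: closed_bigcup; first exact: finite_size.
move=> s /= hs; case/lastP: s hs => [|s i] hs; first by rewrite -hs in n1.
rewrite /atom foldl_rcons; exact: closed_closure.
Qed.

Lemma nw_sub_attr : nonwandering f Xi `<=` attractor f Xi.
Proof.
move=> x Hx n /= n1; apply: (Lambda_closed _ n1).
move=> B /nbhs_ballP [eps eps0 hB].
have [p [dp Hp]] := Hx _ eps0.
have [K HK] := dp n.
have [w [[z [bz tz] <-] bw]] := Hp K.
exists (iter (p K) f z); split; last exact: hB.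
have hn := HK K (leqnn K).
have [s [hs hA]] := iter_atom n _ (tildeX_iter _ (p K - n)%N tz).
exists s => //.
by rewrite -iterD subnKC in hA.
Qed.


Lemma conn_in_one (hopen : forall i, open (Xi i))
  (hdisj : forall i j, i != j -> Xi i `&` Xi j = set0) (C : set X) a i :
  connected C -> C `<=` tildeX f Xi -> C a -> Xi i a -> C `<=` Xi i.
Proof.
move=> cC sC Ca Xa.
have E : C `&` Xi i = C.
  apply: cC.
  - by exists a.
  - by exists (Xi i).
  - exists (~` \bigcup_(j in [set j | j != i]) Xi j).
      by rewrite closedC; apply: bigcup_open => j _; exact: hopen.
    apply/seteqP; split => y [Cy Hy]; split => //.
    + move=> [j /= ji Xj].
      have : (Xi j `&` Xi i) y by [].
      by rewrite hdisj.
    + have [j Xj] := notDelta_in _ (sC _ Cy 0%N).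
      case: (eqVneq j i) => [<-//|ji]; exfalso; apply: Hy; exists j => //.
move=> y Cy; rewrite -E in Cy; by case: Cy.
Qed.

Lemma lip_within (A : set X) :
  (forall x y, A x -> A y -> mdist (f x) (f y) <= mdist x y) ->
  {within A, continuous f}.
Proof.
move=> hl; apply/subspace_continuousP => x Ax.
apply/cvg_ballP => e e0.
apply/nbhs_ballP; exists e => // y bxy Ay.
rewrite ballEmdist /=; apply: le_lt_trans (hl _ _ Ax Ay) _.
by rewrite ballEmdist in bxy.
Qed.

Lemma iter_conn (lam : R) (hlam : 0 < lam < 1) (hopen : forall i, open (Xi i))
  (hdisj : forall i j, i != j -> Xi i `&` Xi j = set0)
  (hlip : forall i (x y : X), Xi i x -> Xi i y ->
          mdist (f x) (f y) <= lam * mdist x y)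
  (C : set X) : connected C -> C `<=` tildeX f Xi -> forall m,
  connected (iter m f @` C) /\
  (forall y z, C y -> C z -> mdist (iter m f y) (iter m f z) <= mdist y z).
Proof.
move=> cC sC; elim=> [|m [cD hD]].
  split; last by move=> y z _ _; rewrite lexx.
  have -> : [set iter 0 f y | y in C] = C.
    by apply/seteqP; split => [y [z Cz <-]//|y Cy]; exists y.
  exact: cC.
set D := iter m f @` C.
have sD : D `<=` tildeX f Xi by move=> _ [y Cy <-]; exact/tildeX_iter/sC.
have [[a Ca]|C0] := pselect (C !=set0); last first.
  have C0' : C = set0 by apply/seteqP; split => // y Cy; apply: C0; exists y.
  split; last by move=> y z; rewrite C0'.
  by rewrite C0' image_set0; exact: connected0.
have [i hi] := notDelta_in _ (sC _ Ca m).
have sDi : D `<=` Xi i.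
  apply: (conn_in_one hopen hdisj D (iter m f a) i cD sD _ hi); by exists a.
have hlD : forall u v, D u -> D v -> mdist (f u) (f v) <= mdist u v.
  move=> u v Du Dv; apply: le_trans (hlip _ _ _ (sDi _ Du) (sDi _ Dv)) _.
  case/andP: hlam => _ l1; exact: ler_piMl (mdist_ge0 _ _) (ltW l1).
split.
  have -> : iter m.+1 f @` C = f @` D.
    apply/seteqP; split => [_ [y Cy <-]|_ [_ [y Cy <-] <-]].
      by exists (iter m f y) => //; exists y.
    by exists y.
  exact: connected_continuous_connected cD (lip_within _ hlD).
move=> y z Cy Cz /=; apply: le_trans (hD _ _ Cy Cz).
by apply: hlD; [exists y|exists z].
Qed.


Lemma part2 (lam : R) (hlam : 0 < lam < 1) (hopen : forall i, open (Xi i))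
  (hdisj : forall i j, i != j -> Xi i `&` Xi j = set0)
  (hlip : forall i (x y : X), Xi i x -> Xi i y ->
          mdist (f x) (f y) <= lam * mdist x y)
  (lc : locally_connected_space (X := X)) (x : X) :
  (tildeX f Xi)° x -> nonwandering f Xi x -> omega f x x.
Proof.
move=> ix Hx.
have [V [oV Vx cV sV]] := lc x _ ix.
have /nbhs_ballP [eps0 eps00 hV] : nbhs x V by exact: open_nbhs_nbhs.
have key : forall d, 0 < d -> forall M, exists m, (M <= m)%N /\ ball x d (iter m f x).
  move=> d d0 M.
  pose e := Num.min eps0 (d / 2).
  have e0 : 0 < e by rewrite lt_min eps00 divr_gt0.
  have [n [dn Hn]] := Hx _ e0.
  have [K HK] := dn M.
  have [w [[z [bz tz] <-] bw]] := Hn K.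
  exists (n K); split; first exact: HK.
  have Vz : V z by apply: hV; apply: le_ball bz; rewrite ge_min lexx.
  have hd := (iter_conn _ hlam hopen hdisj hlip V cV sV (n K)).2 _ _ Vz Vx.
  have b2 : ball (iter (n K) f z) e (iter (n K) f x).
    rewrite ballEmdist /=; apply: le_lt_trans hd _.
    by move: bz; rewrite ballEmdist /= metric_sym.
  have := ball_triangle bw b2; apply: le_ball.
  by rewrite [leRHS](splitr d) lerD // ge_min lexx orbT.
have /choice [g hg] : forall k : nat, exists m,
    (k <= m)%N /\ ball x (k.+1%:R^-1) (iter m f x).
  move=> k; apply: key; by rewrite invr_gt0.
exists g; split.
  by move=> M; exists M => k hk; apply: leq_trans hk (hg k).1.
apply/cvg_ballP => e e0.
near=> k; apply: le_ball (hg k).2; apply: ltW.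
near: k; exact: (near_infty_natSinv_lt (PosNum e0)).
Unshelve. all: by end_near.
Qed.

End Helpers.

Theorem theorem2 (R : realType) (X : metricType R) (f : X -> X) (N : nat)
  (Xi : 'I_N -> set X) (lam : R) :
  compact [set: X] ->
  locally_connected_space (X := X) ->
  piecewise_contracting f Xi lam ->
  (limit_set f Xi `<=` nonwandering f Xi /\ nonwandering f Xi `<=` attractor f Xi) /\
  (forall x : X, (tildeX f Xi)° x -> nonwandering f Xi x -> omega f x x).
Proof.
move=> _ lc [h2 hne hopen hdisj [hcov hlam hlip hne']].
split; [split|].
- move=> y cy; apply: nw_closed; apply: closureS cy => z [x tx oz].
  exact: omega_sub_nw tx oz.
- exact: nw_sub_attr.
- move=> x ix Hx; by eapply part2; eauto.
Qed.
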